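(* Let $G$, $\mathfrak{g}$, $\mu$, $H_0,\dots,H_M$ be as in the context and let $h>0$. The stochastic implicit midpoint integrator $\Phi_h:T^*G\to T^*G$, $(Q_n,P_n)\mapsto(Q_{n+1},P_{n+1})$, defined in the context is almost surely equivariant with respect to the action $g\cdot(Q,P)=(gQ,(g^{-1})^*P)$ of $G$ on $T^*G$, i.e. almost surely $\Phi_h(g\cdot(Q,P))=g\cdot\Phi_h(Q,P)$ for all $g\in G$ and $(Q,P)\in T^*G$.
   Context: $G\subseteq\operatorname{GL}(n,\mathbb{C})$ is a compact simply connected matrix Lie group with $J$-quadratic Lie algebra $\mathfrak{g}$: there is a matrix $J$ with $J^*=\pm J$, $J^2=cI_n$ ($c\in\mathbb{R}\setminus\{0\}$) and $A^*J+JA=0$ for all $A\in\mathfrak{g}$ ($A^*$ = conjugate transpose). $\mathfrak{g}^*$ is identified with $\mathfrak{g}$ via $\langle X,V\rangle=\operatorname{Tr}(X^*V)$, gradients are taken w.r.t. this inner product. The momentum map is $\mu(Q,P)=\tfrac12Q^*P-\tfrac1{2c}JP^*QJ$. $H_0,\dots,H_M:\mathfrak{g}^*\to\mathbb{R}$ are differentiable Hamiltonians. Set $f_i(Q,P)=\tfrac12Q\nabla H_i(\mu(Q,P))$ and $k_i(Q,P)=-\tfrac12P\nabla H_i(\mu(Q,P))^*$, $i=0,\dots,M$. Truncated noise: for each $i$ and step $n$, let $\xi\sim\mathcal N(0,1)$ with $\xi\sqrt h=W^i(t_n+h)-W^i(t_n)$ ($W^i$ independent Brownian motions), let $A_h=\sqrt{2l|\log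 h|}$ for a fixed positive integer $l$, and let $(\zeta_i)_n=A_h$ if $\xi>A_h$, $-A_h$ if $\xi<-A_h$, $\xi$ otherwise. The integrator $\Phi_h=\Phi_h^{(2)}\circ\Phi_h^{(1)}$: given $(Q_n,P_n)$, $\Phi_h^{(1)}$ determines $(\tilde Q,\tilde P)$ implicitly from $Q_n=\tilde Q-\tfrac12\big(f_0(\tilde Q,\tilde P)h+\sum_{i=1}^M f_i(\tilde Q,\tilde P)(\zeta_i)_n\sqrt h\big)$, $P_n=\tilde P-\tfrac12\big(k_0(\tilde Q,\tilde P)h+\sum_{i=1}^M k_i(\tilde Q,\tilde P)(\zeta_i)_n\sqrt h\big)$, and $\Phi_h^{(2)}$ sets $Q_{n+1}=\tilde Q+\tfrac12\big(f_0(\tilde Q,\tilde P)h+\sum_{i} f_i(\tilde Q,\tilde P)(\zeta_i)_n\sqrt h\big)$, $P_{n+1}=\tilde P+\tfrac12\big(k_0(\tilde Q,\tilde P)h+\sum_{i} k_i(\tilde Q,\tilde P)(\zeta_i)_n\sqrt h\big)$. *)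

(* Defs.v *)
From HB Require Import structures.
From mathcomp Require Import all_boot all_order all_algebra.
From mathcomp Require Import all_classical all_reals all_analysis.
From mathcomp Require Import complex.
Set Implicit Arguments. Unset Strict Implicit. Unset Printing Implicit Defensive.
Import Order.TTheory GRing.Theory Num.Theory.
Local Open Scope ring_scope.
Local Open Scope complex_scope.

Section Defs.
Variables (R : realType) (n : nat).
Local Notation C := R[i].
Local Notation Mat := 'M[C]_n.

Definition adj (A : Mat) : Mat := (map_mx (@conjc R) A)^T.

Definition momentum (J : Mat) (c : R) (Q P : Mat) : Mat :=
  (1 / 2)%:C *: (adj Q *m P) - (1 / (2 * c))%:C *: (J *m adj P *m Q *m J).

(* gradH is the gradient of H on g w.r.t. the real inner product
   Re Tr(X^* V): for X in g, gradH X lies in g and for every V in g the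
   directional derivative of H at X along V equals Re Tr((gradH X)^* V). *)
Definition is_gradient_on (g : Mat -> Prop) (H : Mat -> R) (gradH : Mat -> Mat)
  : Prop :=
  forall X, g X ->
    g (gradH X) /\
    forall V, g V ->
      is_derive (0 : R) (1 : R) (fun t : R => H (X + t%:C *: V))
                (@complex.Re R (\tr (adj (gradH X) *m V))).

Definition fvec (J : Mat) (c : R) (gradH : Mat -> Mat) (Q P : Mat) : Mat :=
  (1 / 2)%:C *: (Q *m gradH (momentum J c Q P)).
Definition kvec (J : Mat) (c : R) (gradH : Mat -> Mat) (Q P : Mat) : Mat :=
  - ((1 / 2)%:C *: (P *m adj (gradH (momentum J c Q P)))).

Definition trunc (A x : R) : R := if A < x then A else if x < - A then - A else x.

Definition Ah (l : nat) (h : R) : R := Num.sqrt (2 * l%:R * `|ln h|).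

(* index 0 : drift H_0 ; index lift ord0 i (= i+1) : noise H_{i+1}, i < M *)
Definition increment (M : nat) (F : 'I_M.+1 -> Mat -> Mat -> Mat)
  (h : R) (zeta : 'I_M -> R) (Q P : Mat) : Mat :=
  h%:C *: F ord0 Q P
  + \sum_(i < M) (zeta i * Num.sqrt h)%:C *: F (lift ord0 i) Q P.

(* One step Phi_h = Phi_h^(2) o Phi_h^(1) of the stochastic implicit midpoint
   integrator, as a relation: (Qn,Pn) |-> (Qn1,Pn1) with intermediate
   (Qt,Pt) solving the implicit equations of Phi_h^(1); the noise is the
   truncated Gaussian  zeta_i = trunc(A_h, xi_i). *)
Definition midpoint_step (M : nat) (J : Mat) (c : R)
  (gradH : 'I_M.+1 -> Mat -> Mat) (l : nat) (h : R) (xi : 'I_M -> R)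
  (Qn Pn Qn1 Pn1 : Mat) : Prop :=
  let zeta := fun i => trunc (Ah l h) (xi i) in
  let dQ := increment (fun j => fvec J c (gradH j)) h zeta in
  let dP := increment (fun j => kvec J c (gradH j)) h zeta in
  exists Qt Pt : Mat,
    [/\ Qn = Qt - (1 / 2)%:C *: dQ Qt Pt,
        Pn = Pt - (1 / 2)%:C *: dP Qt Pt,
        Qn1 = Qt + (1 / 2)%:C *: dQ Qt Pt &
        Pn1 = Pt + (1 / 2)%:C *: dP Qt Pt].

End Defs.

(* Main.v *)
Require Import Defs.
From HB Require Import structures.
From mathcomp Require Import all_boot all_order all_algebra.
From mathcomp Require Import all_classical all_reals all_analysis.
From mathcomp Require Import complex.
Import Order.TTheory GRing.Theory Num.Theory.
Local Open Scope ring_scope.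
Local Open Scope complex_scope.

Lemma adjM (R : realType) (n : nat) (A B : 'M[R[i]]_n) :
  adj (A *m B) = adj B *m adj A.
Proof. by rewrite /adj map_mxM trmx_mul. Qed.

Lemma adj1 (R : realType) (n : nat) : adj (1%:M : 'M[R[i]]_n) = 1%:M.
Proof.
apply/matrixP=> i j; rewrite !mxE.
rewrite eq_sym; case: (i == j);
  rewrite ?mulr1n ?mulr0n; apply/eqP; rewrite eq_complex /= ?oppr0 ?eqxx //.
Qed.

Lemma adjK (R : realType) (n : nat) (A : 'M[R[i]]_n) : adj (adj A) = A.
Proof.
rewrite /adj map_trmx trmxK; apply/matrixP => i j; by rewrite !mxE conjcK.
Qed.

Lemma incr_lin (R : realType) (n M : nat) (a : 'M[R[i]]_n)
  (F F' : 'I_M.+1 -> 'M[R[i]]_n -> 'M[R[i]]_n -> 'M[R[i]]_n) h zeta Q P Q' P' :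
  (forall j, F' j Q' P' = a *m F j Q P) ->
  increment F' h zeta Q' P' = a *m increment F h zeta Q P.
Proof.
move=> HF; rewrite /increment mulmxDr HF -scalemxAr; congr (_ + _).
rewrite mulmx_sumr; apply: eq_bigr => i _; by rewrite HF scalemxAr.
Qed.

Theorem lemma4p2 (R : realType) (n M l : nat)
  (G : 'M[R[i]]_n -> Prop) (g : 'M[R[i]]_n -> Prop)
  (J : 'M[R[i]]_n) (c : R)
  (H : 'I_M.+1 -> 'M[R[i]]_n -> R) (gradH : 'I_M.+1 -> 'M[R[i]]_n -> 'M[R[i]]_n) :
  (forall A, G A -> A \in unitmx) ->
  G 1%:M ->
  (forall A B, G A -> G B -> G (A *m B)) ->
  (forall A, G A -> G (invmx A)) ->
  (adj J = J \/ adj J = - J) ->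
  c != 0 ->
  J *m J = c%:C%:M ->
  (forall A, g A -> adj A *m J + J *m A = 0) ->
  (forall j, is_gradient_on g (H j) (gradH j)) ->
  (0 < l)%N ->
  forall h : R, 0 < h ->
  forall xi : 'I_M -> R,
  forall (a Q P Q' P' : 'M[R[i]]_n),
    G a -> G Q ->
    midpoint_step J c gradH l h xi Q P Q' P' ->
    midpoint_step J c gradH l h xi (a *m Q) (adj (invmx a) *m P)
                                   (a *m Q') (adj (invmx a) *m P').
Proof.
move=> Gunit _ _ _ _ _ _ _ _ _ h _ xi a Q P Q' P' Ga _ [Qt [Pt [e1 e2 e3 e4]]].
have ua := Gunit a Ga.
set b := adj (invmx a).
have mom : forall X Y, momentum J c (a *m X) (b *m Y) = momentum J c X Y.
  have ab : adj a *m b = 1%:M by rewrite /b -adjM mulVmx // adj1.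
  have ba : invmx a *m a = 1%:M by rewrite mulVmx.
  move=> X Y; rewrite /momentum !adjM /b adjK -/b.
  rewrite -[adj X *m adj a *m (b *m Y)]mulmxA [adj a *m (b *m Y)]mulmxA ab mul1mx.
  rewrite -!mulmxA [invmx a *m (a *m _)]mulmxA ba mul1mx; reflexivity.
exists (a *m Qt), (b *m Pt).
have hQ : forall j, fvec J c (gradH j) (a *m Qt) (b *m Pt) =
                    a *m fvec J c (gradH j) Qt Pt.
  move=> j; rewrite /fvec mom -scalemxAr mulmxA; reflexivity.
have hP : forall j, kvec J c (gradH j) (a *m Qt) (b *m Pt) =
                    b *m kvec J c (gradH j) Qt Pt.
  move=> j; rewrite /kvec mom mulmxN -scalemxAr mulmxA; reflexivity.
rewrite (@incr_lin R n M a (fun j => fvec J c (gradH j)) (fun j => fvec J c (gradH j)) _ _ _ _ _ _ hQ).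
rewrite (@incr_lin R n M b (fun j => kvec J c (gradH j)) (fun j => kvec J c (gradH j)) _ _ _ _ _ _ hP).
apply: And4.
- rewrite e1 mulmxDr mulmxN -scalemxAr; reflexivity.
- rewrite e2 mulmxDr mulmxN -scalemxAr; reflexivity.
- rewrite e3 mulmxDr -scalemxAr; reflexivity.
- rewrite e4 mulmxDr -scalemxAr; reflexivity.
Qed.
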